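(* Let $(G,\lambda)$ be a finite abelian $2$-group with a nonsingular symmetric linking pairing, let $k\ge1$, and assume the layer form $b_k$ is alternating. Define $q_k:H_k(G)\to\mathbb Q/\mathbb Z$ by $q_k(\bar x)=2^{k-1}\lambda(x,x)$ for $x\in G$ representing $\bar x\in H_k(G)=G/G_k$. Then $q_k$ is well-defined and satisfies $q_k(\bar x+\bar y)-q_k(\bar x)-q_k(\bar y)=2^k\lambda(x,y)\in\mathbb Q/\mathbb Z$ for all $\bar x,\bar y\in H_k(G)$.
   Context: A linking pairing is a symmetric bilinear map $\lambda:G\times G\to\mathbb Q/\mathbb Z$, nonsingular if its adjoint $G\to\mathrm{Hom}(G,\mathbb Q/\mathbb Z)$ is an isomorphism. $G_k=\{x\in G:2^kx=0\}$, $G_0=0$, $P_k(G)=G_k/(G_{k-1}+2G_{k+1})$, and $b_k(\bar x,\bar y)=2^k\lambda(x,y)\bmod2$ is the induced $\mathbb F_2$-form on $P_k(G)$; alternating means $b_k(v,v)=0$ for all $v$ (this is the ''Type E'' case). *)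

(* Defs.v *)
From mathcomp Require Import all_boot all_order all_algebra.
Set Implicit Arguments. Unset Strict Implicit. Unset Printing Implicit Defensive.
Import Order.TTheory GRing.Theory Num.Theory.
Local Open Scope ring_scope.

(* Q/Z is encoded by rat taken modulo the integers: a map into Q/Z is given by
   a rat-valued lift, and equalities in Q/Z are congruences modulo Z. *)
Definition eqQZ (a b : rat) : Prop := (a - b) \is a Num.int.

Section Linking.
Variable G : finZmodType.

Definition QZhom (phi : G -> rat) : Prop :=
  forall x y, eqQZ (phi (x + y)) (phi x + phi y).

Definition linking_pairing (lam : G -> G -> rat) : Prop :=
  (forall x y, eqQZ (lam x y) (lam y x)) /\
  (forall x y z, eqQZ (lam (x + y) z) (lam x z + lam y z)) /\
  (forall x y z, eqQZ (lam x (y + z)) (lam x y + lam x z)).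

(* the adjoint x |-> lam x (.) : G -> Hom(G, Q/Z) is an isomorphism
   (it is a homomorphism by bilinearity; here: bijective, with equality
   in Hom(G,Q/Z) being pointwise equality in Q/Z) *)
Definition nonsingular (lam : G -> G -> rat) : Prop :=
  (forall x x', (forall y, eqQZ (lam x y) (lam x' y)) -> x = x') /\
  (forall phi : G -> rat, QZhom phi ->
     exists x, forall y, eqQZ (lam x y) (phi y)).

Definition Gk (k : nat) (x : G) : bool := x *+ (2 ^ k) == 0.

(* b_k alternating on P_k(G) = G_k/(G_{k-1} + 2 G_{k+1}):
   b_k(v,v) = 2^k lam(v,v) mod 2 vanishes for every v in G_k *)
Definition layer_alternating (lam : G -> G -> rat) (k : nat) : Prop :=
  forall v, Gk k v -> ((2 ^+ k * lam v v) / 2) \is a Num.int.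

Definition qk (lam : G -> G -> rat) (k : nat) (x : G) : rat :=
  2 ^+ k.-1 * lam x x.
End Linking.

(* Main.v *)
Require Import Defs.
From mathcomp Require Import all_boot all_order all_algebra.
From mathcomp Require Import ring.
Import GRing.Theory Num.Theory.
Set Implicit Arguments. Unset Strict Implicit.
Local Open Scope ring_scope.

Lemma eqQZ_trans a b c : eqQZ a b -> eqQZ b c -> eqQZ a c.
Proof.
rewrite /eqQZ => h1 h2.
have -> : a - c = (a - b) + (b - c) by ring.
exact: rpredD.
Qed.

Lemma eqQZ_sym a b : eqQZ a b -> eqQZ b a.
Proof.
rewrite /eqQZ => h; have -> : b - a = - (a - b) by ring.
by rewrite rpredN.
Qed.

Lemma eqQZ_refl a : eqQZ a a.
Proof. by rewrite /eqQZ subrr. Qed.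

Lemma eqQZ_add a b c d : eqQZ a b -> eqQZ c d -> eqQZ (a + c) (b + d).
Proof.
rewrite /eqQZ => h1 h2.
have -> : a + c - (b + d) = (a - b) + (c - d) by ring.
exact: rpredD.
Qed.

Lemma eqQZ_mul m a b : m \is a Num.int -> eqQZ a b -> eqQZ (m * a) (m * b).
Proof.
rewrite /eqQZ => hm h; rewrite -mulrBr; exact: rpredM.
Qed.

Lemma int_eqQZ a : a \is a Num.int -> eqQZ a 0.
Proof. by rewrite /eqQZ subr0. Qed.

Lemma two_pow_int n : (2 ^+ n : rat) \is a Num.int.
Proof. apply: rpredX; exact: (@rpred_nat _ _ 2). Qed.

Section S.
Variable G : finZmodType.
Variable lam : G -> G -> rat.
Hypothesis hl : linking_pairing lam.

Lemma lam0 x : lam x 0 \is a Num.int.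
Proof.
case: hl => _ [_ hr]; have := hr x 0 0; rewrite addr0 /eqQZ.
have -> : lam x 0 - (lam x 0 + lam x 0) = - lam x 0 by ring.
by rewrite rpredN.
Qed.

Lemma lam_scale x y n : eqQZ (n%:R * lam x y) (lam x (y *+ n)).
Proof.
case: hl => _ [_ hr].
elim: n => [|n IH].
  rewrite mul0r mulr0n; apply: eqQZ_sym; apply: int_eqQZ; exact: lam0.
rewrite -natr1 mulrDl mul1r mulrSr.
apply: (eqQZ_trans _ (eqQZ_sym (hr x (y *+ n) y))).
exact: eqQZ_add IH (eqQZ_refl _).
Qed.

Lemma part2 k x y : (1 <= k)%N ->
  eqQZ (qk lam k (x + y) - qk lam k x - qk lam k y) (2 ^+ k * lam x y).
Proof.
move=> hk; case: hl => hs [hl1 hr].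
rewrite /qk.
have e1 : eqQZ (lam (x + y) (x + y)) (lam x x + lam x y + (lam y x + lam y y)).
  apply: eqQZ_trans (hl1 _ _ _) _.
  apply: eqQZ_add; [exact: hr | exact: hr].
have e2 : eqQZ (lam (x + y) (x + y) - lam x x - lam y y) (lam x y + lam y x).
  have := eqQZ_add (eqQZ_add e1 (eqQZ_refl (- lam x x))) (eqQZ_refl (- lam y y)).
  move/eqQZ_trans; apply.
  have -> : lam x x + lam x y + (lam y x + lam y y) + - lam x x + - lam y y
           = lam x y + lam y x by ring.
  exact: eqQZ_refl.
have e3 : eqQZ (lam x y + lam y x) (2 * lam x y).
  have -> : 2 * lam x y = lam x y + lam x y by ring.
  apply: eqQZ_add (eqQZ_refl _) _; exact: eqQZ_sym.
have := eqQZ_mul (two_pow_int k.-1) (eqQZ_trans e2 e3).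
have -> : (2 ^+ k : rat) = 2 ^+ k.-1 * 2 by rewrite -exprSr prednK.
rewrite mulrA.
by have -> : 2 ^+ k.-1 * lam (x + y) (x + y) - 2 ^+ k.-1 * lam x x - 2 ^+ k.-1 * lam y y
  = 2 ^+ k.-1 * (lam (x + y) (x + y) - lam x x - lam y y) by ring.
Qed.
End S.

Theorem proposition5p12 (G : finZmodType) (lam : G -> G -> rat) (k : nat) :
  (2%N).-nat #|G| ->
  linking_pairing lam -> nonsingular lam ->
  (1 <= k)%N ->
  layer_alternating lam k ->
  (* q_k is well defined on H_k(G) = G / G_k *)
  (forall x x', Gk k (x - x') -> eqQZ (qk lam k x) (qk lam k x')) /\
  (* q_k(x+y) - q_k(x) - q_k(y) = 2^k lam(x,y) in Q/Z *)
  (forall x y, eqQZ (qk lam k (x + y) - qk lam k x - qk lam k y)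
                    (2 ^+ k * lam x y)).
Proof.
move=> _ hl _ hk halt; split; last by move=> x y; exact: part2.
move=> x x' hd.
set d := x - x'.
have hx : x = x' + d by rewrite /d addrC subrK.
have p2 := part2 hl x' d hk.
have hq : qk lam k d \is a Num.int.
  have := halt d hd; rewrite /qk.
  have -> : 2 ^+ k * lam d d / 2 = 2 ^+ k.-1 * lam d d; last by [].
  by rewrite -[in LHS](prednK hk) exprSr; field.
have hc : (2 ^+ k * lam x' d) \is a Num.int.
  have := lam_scale hl x' d (2 ^ k).
  move: hd; rewrite /Gk => /eqP ->.
  rewrite natrX /eqQZ => h.
  have -> : 2 ^+ k * lam x' d = (2%:R ^+ k * lam x' d - lam x' 0) + lam x' 0 by ring.
  apply: rpredD => //; exact: lam0.
move: p2; rewrite /eqQZ -hx => h.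
have -> : qk lam k x - qk lam k x' =
  (qk lam k x - qk lam k x' - qk lam k d - 2 ^+ k * lam x' d) + qk lam k d + 2 ^+ k * lam x' d by ring.
apply: rpredD => //; apply: rpredD => //.
Qed.
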